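(* Let $F,W,r,\sigma_0^2,\eta,P_c,P_{\max}>0$ and $\alpha>0$. Consider the problem \[ \min_{P_t}\ \frac{F}{W\log_2\!\left(1+\frac{P_t r^{-\alpha}}{\sigma_0^2}\right)}\left(\frac{1}{\eta}P_t+P_c\right)\quad\text{s.t.}\quad 0<P_t\le P_{\max}. \] Denote $y=1+P_t\frac{r^{-\alpha}}{\sigma_0^2}$, $y_0=1+P_{\max}\frac{r^{-\alpha}}{\sigma_0^2}$, and $\varepsilon=\frac{r^{-\alpha}\eta P_c}{\sigma_0^2}-1$. If $\left(\frac{y_0}{e}\right)^{y_0}<2^{\varepsilon/\ln 2}$, then the optimal solution is $P_t^*=P_{\max}$. Otherwise, the optimal solution $P_t^*$ satisfies $\left(\frac{y}{e}\right)^{y}=2^{\varepsilon/\ln 2}$ with $y=1+P_t^*\frac{r^{-\alpha}}{\sigma_0^2}$.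
   Context: Interpretation: the objective is the (approximate) energy consumed by a D2D transmitter to send a file of $F$ bits over a link of distance $r$ with bandwidth $W$, path-loss exponent $\alpha$, noise-plus-interference variance $\sigma_0^2$, power amplifier efficiency $\eta$, circuit power $P_c$, and transmit power $P_t$ bounded by $P_{\max}$. *)

(* Defs.v *)
From Stdlib Require Import Reals.
Open Scope R_scope.

Definition log2 (x : R) : R := ln x / ln 2.

Definition energy (F W r alpha sigma02 eta Pc Pt : R) : R :=
  F / (W * log2 (1 + Pt * Rpower r (- alpha) / sigma02)) * (/ eta * Pt + Pc).

Definition is_optimal (F W r alpha sigma02 eta Pc Pmax Pt : R) : Prop :=
  0 < Pt <= Pmax /\
  forall Q, 0 < Q <= Pmax ->
    energy F W r alpha sigma02 eta Pc Pt <= energy F W r alpha sigma02 eta Pc Q.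

(* Main.v *)
Require Import Defs.
From Stdlib Require Import Reals Lra Ranalysis5.
Open Scope R_scope.

Lemma ln_lt_xm1 x : 0 < x -> x <> 1 -> ln x < x - 1.
Proof.
  intros Hx H1. assert (ln x <> 0).
  { intro E. apply H1. rewrite <- (exp_ln x Hx), E. apply exp_0. }
  pose proof (exp_ineq1 _ H). rewrite exp_ln in H0; lra.
Qed.

Definition g e y := (y + e) / ln y.
Definition h e y := y * ln y - y - e.

Lemma lnpos y : 1 < y -> 0 < ln y.
Proof. intros. rewrite <- ln_1. apply ln_increasing; lra. Qed.

Lemma lemA e y1 y2 : -1 < e -> 1 < y1 -> y1 < y2 -> h e y2 <= 0 -> g e y2 < g e y1.
Proof.
  intros He H1 H2 Hh. unfold g, h in *.
  pose proof (lnpos _ H1). pose proof (lnpos y2 ltac:(lra)).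
  assert (ln y1 < ln y2 - (y2 - y1)/y2).
  { assert (ln (y1/y2) < y1/y2 - 1).
    { apply ln_lt_xm1. apply Rdiv_lt_0_compat; lra.
      intro E. assert (y1 = y2). { field_simplify_eq in E; lra. } lra. }
    unfold Rdiv in H3. rewrite ln_mult, ln_Rinv in H3 by (try apply Rinv_0_lt_compat; lra).
    replace (ln y2 - (y2 - y1) / y2) with (ln y2 + (y1 * / y2 - 1)) by (field; lra). lra. }
  apply (Rmult_lt_reg_r (ln y1 * ln y2)). nra.
  replace ((y2 + e) / ln y2 * (ln y1 * ln y2)) with ((y2 + e) * ln y1) by (field; lra).
  replace ((y1 + e) / ln y1 * (ln y1 * ln y2)) with ((y1 + e) * ln y2) by (field; lra).
  assert ((y2 + e) * ln y1 < (y2+e) * (ln y2 - (y2 - y1)/y2)) by (apply Rmult_lt_compat_l; lra).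
  assert ((y2+e) * ((y2 - y1)/y2) - (y2 - y1) * ln y2 = (y2 - y1) * (-(y2 * ln y2 - y2 - e)) / y2) by (field; lra).
  assert (0 <= (y2 - y1) * (-(y2 * ln y2 - y2 - e)) / y2).
  { apply Rmult_le_pos. nra. left. apply Rinv_0_lt_compat; lra. }
  nra.
Qed.

Lemma lemB e y1 y2 : -1 < e -> 1 < y1 -> y1 < y2 -> 0 <= h e y1 -> g e y1 < g e y2.
Proof.
  intros He H1 H2 Hh. unfold g, h in *.
  pose proof (lnpos _ H1). pose proof (lnpos y2 ltac:(lra)).
  assert (ln y2 < ln y1 + (y2 - y1)/y1).
  { assert (ln (y2/y1) < y2/y1 - 1).
    { apply ln_lt_xm1. apply Rdiv_lt_0_compat; lra.
      intro E. assert (y1 = y2). { field_simplify_eq in E; lra. } lra. }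
    unfold Rdiv in H3. rewrite ln_mult, ln_Rinv in H3 by (try apply Rinv_0_lt_compat; lra).
    replace (ln y1 + (y2 - y1) / y1) with (ln y1 + (y2 * / y1 - 1)) by (field; lra). lra. }
  apply (Rmult_lt_reg_r (ln y1 * ln y2)). nra.
  replace ((y2 + e) / ln y2 * (ln y1 * ln y2)) with ((y2 + e) * ln y1) by (field; lra).
  replace ((y1 + e) / ln y1 * (ln y1 * ln y2)) with ((y1 + e) * ln y2) by (field; lra).
  assert ((y1 + e) * ln y2 < (y1+e) * (ln y1 + (y2 - y1)/y1)) by (apply Rmult_lt_compat_l; lra).
  assert ((y1+e) * ((y2 - y1)/y1) - (y2 - y1) * ln y1 = - ((y2 - y1) * (y1 * ln y1 - y1 - e) / y1)) by (field; lra).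
  assert (0 <= (y2 - y1) * (y1 * ln y1 - y1 - e) / y1).
  { apply Rmult_le_pos. nra. left. apply Rinv_0_lt_compat; lra. }
  nra.
Qed.

Lemma h_cont e a : 0 < a -> continuity_pt (h e) a.
Proof.
  intros Ha.
  assert (D : derivable_pt_lim (h e) a (1 * ln a + a * / a - 1 - 0)).
  { unfold h.
    apply (derivable_pt_lim_minus (fun y => y * ln y - y) (fun _ => e)).
    apply (derivable_pt_lim_minus (fun y => y * ln y) (fun y => y)).
    apply (derivable_pt_lim_mult (fun y => y) ln).
    apply derivable_pt_lim_id. apply derivable_pt_lim_ln; auto.
    apply derivable_pt_lim_id. apply derivable_pt_lim_const. }
  apply derivable_continuous_pt. exists (1 * ln a + a * / a - 1 - 0). exact D.
Qed.

Lemma h_root e y0 : -1 < e -> 1 < y0 -> 0 <= h e y0 -> exists ys, 1 < ys <= y0 /\ h e ys = 0.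
Proof.
  intros He H1 H0. destruct H0 as [H0|H0].
  - destruct (IVT_interv (h e) 1 y0) as [z [Hz Hz0]]; auto.
    intros a Ha; apply h_cont; lra. unfold h; rewrite ln_1; lra.
    exists z. split; auto. split; auto. destruct (proj1 Hz); auto.
    subst z. unfold h in Hz0; rewrite ln_1 in Hz0; lra. lra.
  - exists y0; split; auto; lra.
Qed.

Lemma h_mono e y1 y2 : 1 <= y1 -> y1 < y2 -> h e y1 < h e y2.
Proof.
  intros. unfold h. assert (0 <= ln y1). { destruct H. left; apply lnpos; auto. subst; rewrite ln_1; lra. }
  assert (ln (y1/y2) < y1/y2 - 1).
  { apply ln_lt_xm1. apply Rdiv_lt_0_compat; lra.
    intro E. assert (y1 = y2). { field_simplify_eq in E; lra. } lra. }
  unfold Rdiv in H2. rewrite ln_mult, ln_Rinv in H2 by (try apply Rinv_0_lt_compat; lra).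
  assert (y2 * (ln y1 - ln y2) < y2 * (y1 * / y2 - 1)) by (apply Rmult_lt_compat_l; lra).
  replace (y2 * (y1 * / y2 - 1)) with (y1 - y2) in H3 by (field; lra).
  nra.
Qed.

Lemma cond_iff y e : 0 < y -> (Rpower (y / exp 1) y < Rpower 2 (e / ln 2) <-> h e y < 0)
  /\ (Rpower (y / exp 1) y = Rpower 2 (e / ln 2) <-> h e y = 0).
Proof.
  intros Hy. unfold Rpower.
  assert (ln 2 <> 0). { pose proof ln_lt_2. lra. }
  replace (e / ln 2 * ln 2) with e by (field; auto).
  unfold Rdiv. rewrite ln_mult, ln_Rinv, ln_exp by (try apply Rinv_0_lt_compat; auto; apply exp_pos).
  unfold h. split; split; intro.
  - apply exp_lt_inv in H0. lra.
  - apply exp_increasing. lra.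
  - apply (f_equal ln) in H0. rewrite !ln_exp in H0. lra.
  - f_equal. lra.
Qed.

Require Import Defs.

Lemma energy_g F W r alpha sigma02 eta Pc P :
  0 < F -> 0 < W -> 0 < sigma02 -> 0 < eta -> 0 < P ->
  energy F W r alpha sigma02 eta Pc P =
  (F * ln 2 / (W * (Rpower r (- alpha) / sigma02) * eta)) *
  g (Rpower r (- alpha) * eta * Pc / sigma02 - 1) (1 + P * (Rpower r (- alpha) / sigma02)).
Proof.
  intros. unfold energy, g, log2.
  assert (0 < Rpower r (- alpha)) by (unfold Rpower; apply exp_pos).
  assert (0 < Rpower r (- alpha) / sigma02) by (apply Rdiv_lt_0_compat; auto).
  assert (0 < ln (1 + P * (Rpower r (- alpha) / sigma02))) by (apply lnpos; nra).
  replace (1 + P * Rpower r (- alpha) / sigma02) with (1 + P * (Rpower r (- alpha) / sigma02)) by (field; lra).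
  assert (ln 2 <> 0). { pose proof ln_lt_2. lra. }
  field. repeat split; lra.
Qed.

Theorem proposition2 (F W r sigma02 eta Pc Pmax alpha : R)
  (hF : 0 < F) (hW : 0 < W) (hr : 0 < r) (hs : 0 < sigma02) (heta : 0 < eta)
  (hPc : 0 < Pc) (hPmax : 0 < Pmax) (halpha : 0 < alpha) :
  let y_of := fun Pt => 1 + Pt * (Rpower r (- alpha) / sigma02) in
  let y0 := y_of Pmax in
  let eps := Rpower r (- alpha) * eta * Pc / sigma02 - 1 in
  (Rpower (y0 / exp 1) y0 < Rpower 2 (eps / ln 2) ->
     is_optimal F W r alpha sigma02 eta Pc Pmax Pmax /\
     forall Pt, is_optimal F W r alpha sigma02 eta Pc Pmax Pt -> Pt = Pmax) /\
  (~ (Rpower (y0 / exp 1) y0 < Rpower 2 (eps / ln 2)) ->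
     (exists Pt, is_optimal F W r alpha sigma02 eta Pc Pmax Pt) /\
     forall Pt, is_optimal F W r alpha sigma02 eta Pc Pmax Pt ->
       Rpower (y_of Pt / exp 1) (y_of Pt) = Rpower 2 (eps / ln 2)).
Proof.
  intros y_of y0 eps.
  set (A := Rpower r (- alpha)).
  assert (HA : 0 < A) by (unfold A, Rpower; apply exp_pos).
  set (a := A / sigma02).
  assert (Ha : 0 < a) by (apply Rdiv_lt_0_compat; auto).
  assert (He : -1 < eps).
  { unfold eps. assert (0 < A * eta * Pc / sigma02).
    { apply Rdiv_lt_0_compat; auto. repeat apply Rmult_lt_0_compat; auto. } fold A. lra. }
  set (K := F * ln 2 / (W * a * eta)).
  assert (HK : 0 < K).
  { unfold K. pose proof ln_lt_2. apply Rdiv_lt_0_compat.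
    apply Rmult_lt_0_compat; lra.
    apply Rmult_lt_0_compat; [apply Rmult_lt_0_compat|]; auto. }
  assert (HE : forall P Q, 0 < P -> 0 < Q ->
     (energy F W r alpha sigma02 eta Pc P <= energy F W r alpha sigma02 eta Pc Q
       <-> g eps (y_of P) <= g eps (y_of Q))).
  { intros P Q HP HQ. rewrite !energy_g by auto. fold A a K. fold A in eps.
    unfold y_of. fold A a. split; intro.
    - apply (Rmult_le_reg_l K); auto.
    - apply Rmult_le_compat_l. lra. exact H. }
  assert (Hy : forall P, 0 < P -> 1 < y_of P) by (intros; unfold y_of; fold A a; nra).
  assert (Hym : forall P Q, P < Q -> y_of P < y_of Q) by (intros; unfold y_of; fold A a; nra).
  assert (Hy0 : 1 < y0) by (apply Hy; auto).
  assert (Hopt : forall Pt Q, is_optimal F W r alpha sigma02 eta Pc Pmax Pt -> 0 < Q <= Pmax ->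
     g eps (y_of Pt) <= g eps (y_of Q)).
  { intros Pt Q [HPt Hall] HQ. apply HE; try lra. apply Hall; auto. }
  destruct (cond_iff y0 eps ltac:(lra)) as [C1 C2].
  split.
  - intro Hc. apply C1 in Hc.
    split.
    + split. lra. intros Q HQ. apply HE; try lra.
      destruct (Req_dec Q Pmax). subst; lra.
      left. apply lemA; auto. apply Hy; lra. apply Hym; lra. left; exact Hc.
    + intros Pt Hpt. destruct (Rlt_dec Pt Pmax) as [Hl|Hl].
      * exfalso. pose proof (Hopt _ _ Hpt (conj hPmax (Rle_refl _))).
        assert (g eps y0 < g eps (y_of Pt)). { apply lemA; auto. apply Hy. apply Hpt. apply Hym; lra. lra. }
        fold y0 in H. lra.
      * destruct Hpt as [[? ?] _]. lra.
  - intro Hc. assert (Hh : 0 <= h eps y0). { destruct (Rlt_dec (h eps y0) 0). exfalso; apply Hc, C1; auto. lra. }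
    destruct (h_root eps y0 He Hy0 Hh) as [ys [Hys Hhys]].
    set (Ps := (ys - 1) / a).
    assert (HyPs : y_of Ps = ys) by (unfold y_of, Ps; fold A a; field; lra).
    assert (HPs : 0 < Ps <= Pmax).
    { split. unfold Ps; apply Rdiv_lt_0_compat; lra.
      destruct (Rle_dec Ps Pmax); auto. exfalso. assert (y0 < y_of Ps) by (apply Hym; lra). lra. }
    assert (Hmin : forall Q, 0 < Q -> g eps ys <= g eps (y_of Q)).
    { intros Q HQ. destruct (Rtotal_order (y_of Q) ys) as [Hl|[Hq|Hg]].
      - left. apply lemA; [auto|apply Hy; auto|exact Hl|right; exact Hhys].
      - rewrite Hq; lra.
      - left. apply lemB; [auto|lra|exact Hg|right; symmetry; exact Hhys]. }
    split.
    + exists Ps. split; auto. intros Q HQ. apply HE; try lra. rewrite HyPs. apply Hmin; lra.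
    + intros Pt Hpt.
      assert (HPt : 0 < Pt <= Pmax) by apply Hpt.
      pose proof (Hopt _ _ Hpt HPs) as Hle. rewrite HyPs in Hle.
      assert (Hyt := Hy Pt (proj1 HPt)).
      apply (proj2 (cond_iff (y_of Pt) eps ltac:(lra))).
      destruct (Rtotal_order (h eps (y_of Pt)) 0) as [Hl|[Hq|Hg]]; auto; exfalso.
      * assert (y_of Pt < ys).
        { destruct (Rlt_dec (y_of Pt) ys); auto. exfalso.
          destruct (Req_dec (y_of Pt) ys). rewrite H in Hl; lra.
          pose proof (h_mono eps ys (y_of Pt) ltac:(lra) ltac:(lra)). lra. }
        pose proof (lemA eps (y_of Pt) ys He Hyt H ltac:(lra)). lra.
      * assert (ys < y_of Pt).
        { destruct (Rlt_dec ys (y_of Pt)); auto. exfalso.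
          destruct (Req_dec (y_of Pt) ys). rewrite H in Hg; lra.
          pose proof (h_mono eps (y_of Pt) ys ltac:(lra) ltac:(lra)). lra. }
        pose proof (lemB eps ys (y_of Pt) He ltac:(lra) H ltac:(lra)). lra.
Qed.
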